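(* Let $\Sigma$ be a complete fan in $N_{\mathbb R}$ and $\mathbb L=(L,\Sigma_L,\mu,\pi,\varphi)$ a tropical Lagrangian multi-section over $\Sigma$. Then there exists a separable tropical Lagrangian multi-section $\mathbb L_{sep}$ over $\Sigma$ such that $\mathbb L_{sep}\le\mathbb L$. In particular, every tropical Lagrangian multi-section is combinatorially equivalent to a separable one.
   Context: $N$ is a lattice of rank $n$, $M=\mathrm{Hom}(N,\mathbb Z)$, $N_{\mathbb R}=N\otimes\mathbb R$, $\Sigma(k)$ the $k$-dimensional cones of $\Sigma$. A cone complex is a topological space $X$ with a finite collection $\Sigma_X$ of closed subsets (cones) and for each cone $\sigma$ a finitely generated group $M(\sigma)$ of continuous real functions on $\sigma$ such that evaluation identifies $\sigma$ homeomorphically with a convex rational polyhedral cone in $(M(\sigma)\otimes\mathbb R)^\vee$, preimages of faces are cones with $M$ given by restriction, and $X$ is the disjoint union of the relative interiors of its cones. A morphism sends cones into cones and pulls back $M(\sigma)$ into $M(\sigma')$. A weight $\mu:X\to\mathbb Z_{>0}$ is constant on relative interiors; $\mathrm{Tr}_f(\mu)(x)=\sum_{x'\in f^{-1}(x)}\mu(x')$. A branched covering map $\pi:(L,\Sigma_L,\mu)\to(B,\Sigma_B)$ is a surjective morphism mapping each cone homeomorphically onto a cone and with $\mathrm{Tr}_{\pi|_V}(\mu)$ constant for every connected open $U\subset B$ and connected component $V$ of $\pi^{-1}(U)$. A tropical Lagrangian multi-section of rank $r$ over $\Sigma$ is $\mathbb L=(L,\Sigma_L,\mu,\pi,\varphi)$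 with $\pi:(L,\Sigma_L,\mu)\to(N_{\mathbb R},\Sigma)$ a branched covering with $\mathrm{Tr}_\pi(\mu)=r$ and $\varphi:L\to\mathbb R$ continuous with $\varphi|_{\sigma'}\in M(\sigma')$ for all cones $\sigma'$. It is connected if $L$ is. For tropical Lagrangian multi-sections $\mathbb L_1,\mathbb L_2$ of the same rank, $\mathbb L_1\le\mathbb L_2$ means there is a surjective morphism of cone complexes $f:L_2\to L_1$ with $\pi_1\circ f=\pi_2$, $\mathrm{Tr}_f(\mu_2)=\mu_1$ and $f^*\varphi_1=\varphi_2$. For connected $\mathbb L_1,\mathbb L_2$, write $\mathbb L_2\sim_c\mathbb L_1$ if they have the same rank and there is $\mathbb L$ with $\mathbb L\le\mathbb L_1$ and $\mathbb L\le\mathbb L_2$; combinatorial equivalence is the equivalence relation generated by $\sim_c$. $\mathbb L$ is $k$-separable if it is connected and for every $\tau\in\Sigma(k)$ and distinct cones $\tau^{(\alpha)},\tau^{(\beta)}$ of $L$ mapping onto $\tau$ one has $\varphi|_{\tau^{(\alpha)}}\ne\varphi|_{\tau^{(\beta)}}$ (as functions pulled back to $\tau$); separable means $1$-separable. *)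

(* Defs.v *)
From HB Require Import structures.
From mathcomp Require Import all_boot all_order all_algebra.
From mathcomp Require Import all_classical all_reals all_analysis.
From mathcomp Require Import Rstruct Rstruct_topology.
From Stdlib Require Import Relation_Operators.
Set Implicit Arguments. Unset Strict Implicit. Unset Printing Implicit Defensive.
Import Order.TTheory GRing.Theory Num.Theory.
Local Open Scope classical_set_scope.
Local Open Scope ring_scope.

Notation R := Rdefinitions.R.

Definition lin (k : nat) (a v : 'rV[R]_k) : R := \sum_(j < k) a 0 j * v 0 j.

Definition poscone (k : nat) (s : seq 'rV[rat]_k) : set 'rV[R]_k :=
  [set v | exists lam : 'I_(size s) -> R,
     (forall j, 0 <= lam j) /\ v = \sum_(j < size s) lam j *: map_mx ratr s`_j].

Definition is_face (k : nat) (C F : set 'rV[R]_k) : Prop :=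
  exists u : 'rV[R]_k, (forall x, C x -> 0 <= lin u x) /\
    F = C `&` [set x | lin u x = 0].

(* g restricted to A is a homeomorphism onto its image *)
Definition embedding_on (X Y : topologicalType) (A : set X) (g : X -> Y) : Prop :=
  {within A, continuous g} /\
  (forall x y, A x -> A y -> g x = g y -> x = y) /\
  (forall x, A x -> forall U, nbhs x U ->
     \forall y \near g x, forall z, A z -> g z = y -> U z).

(* Fans in N_R = R^n  (N = Z^n, M = Hom(N,Z))                          *)

Record fan (n : nat) := Fan {
  fan_idx : finType;
  fan_gens : fan_idx -> seq 'rV[rat]_n }.

Definition fan_cone n (S : fan n) (i : fan_idx S) : set 'rV[R]_n :=
  poscone (fan_gens i).

Definition fan_dim n (S : fan n) (i : fan_idx S) : nat :=
  \rank (\matrix_(j < size (fan_gens i), l < n) ((fan_gens i)`_j) 0 l).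

Definition is_fan n (S : fan n) : Prop :=
  [/\ (forall i j : fan_idx S, fan_cone i = fan_cone j -> i = j),
      (forall (i : fan_idx S) v, fan_cone i v -> fan_cone i (- v) -> v = 0),
      (forall (i : fan_idx S) F, is_face (fan_cone i) F -> exists j : fan_idx S, fan_cone j = F) &
      (forall i j : fan_idx S, is_face (fan_cone i) (fan_cone i `&` fan_cone j) /\
                   is_face (fan_cone j) (fan_cone i `&` fan_cone j))].

Definition complete_fan n (S : fan n) : Prop :=
  forall v : 'rV[R]_n, exists i : fan_idx S, fan_cone i v.

(* Data of a cone complex structure on a topological space X: a finite
   family of subsets (the cones) and, for each cone sigma, a finite list of
   real functions generating the group M(sigma) (only their values on sigma
   matter). *)
Record cone_complex (X : topologicalType) := ConeComplex {
  cc_idx : finType;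
  cc_cone : cc_idx -> set X;
  cc_dim : cc_idx -> nat;
  cc_gen : forall i : cc_idx, 'I_(cc_dim i) -> X -> R }.

Section ConeComplexDefs.
Variables (X : topologicalType) (C : cone_complex X).

(* evaluation map sigma -> Hom(Z^k, R) = R^k  *)
Definition cc_ev (i : cc_idx C) (x : X) : 'rV[R]_(cc_dim i) :=
  \row_j cc_gen j x.

Definition inM (i : cc_idx C) (f : X -> R) : Prop :=
  exists z : 'I_(cc_dim i) -> int,
    forall x, cc_cone i x -> f x = \sum_(k < cc_dim i) (z k)%:~R * cc_gen k x.

Definition inM_restr (i j : cc_idx C) (f : X -> R) : Prop :=
  exists z : 'I_(cc_dim i) -> int,
    forall x, cc_cone j x -> f x = \sum_(k < cc_dim i) (z k)%:~R * cc_gen k x.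

Definition supp_fun (i : cc_idx C) (a : 'rV[R]_(cc_dim i)) : Prop :=
  forall y, cc_cone i y -> 0 <= lin a (cc_ev i y).

(* relative interior of sigma_i: points lying on no proper face *)
Definition relint (i : cc_idx C) (x : X) : Prop :=
  cc_cone i x /\
  forall a, supp_fun a -> lin a (cc_ev i x) = 0 ->
    forall y, cc_cone i y -> lin a (cc_ev i y) = 0.

Definition is_cone_complex : Prop :=
  [/\ (forall i : cc_idx C, closed (cc_cone i)),
      (forall (i : cc_idx C) (k : 'I_(cc_dim i)), {within cc_cone i, continuous (cc_gen k)}),
      (* evaluation identifies sigma homeomorphically with a convex rational
         polyhedral cone in (M(sigma) (x) R)^vee  (viewed inside R^k) *)
      (forall i : cc_idx C, embedding_on (cc_cone i) (cc_ev i) /\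
          exists s : seq 'rV[rat]_(cc_dim i), cc_ev i @` cc_cone i = poscone s),
      (* preimages of faces are cones, with M given by restriction *)
      (forall i (a : 'rV[R]_(cc_dim i)), supp_fun a ->
          exists j : cc_idx C, cc_cone j = cc_cone i `&` [set x | lin a (cc_ev i x) = 0] /\
                    forall f, inM j f <-> inM_restr i j f) &
      (* X is the disjoint union of the relative interiors of the cones *)
      (forall x, exists! i : cc_idx C, relint i x)].

Definition is_weight (mu : X -> nat) : Prop :=
  (forall x, (0 < mu x)%N) /\
  (forall (i : cc_idx C) x y, relint i x -> relint i y -> mu x = mu y).

End ConeComplexDefs.

Definition cc_morphism (X Y : topologicalType) (CX : cone_complex X)
    (CY : cone_complex Y) (f : X -> Y) : Prop :=
  continuous f /\
  forall i : cc_idx CX, exists j : cc_idx CY,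
    (forall x, cc_cone i x -> cc_cone j (f x)) /\
    (forall g, inM j g -> inM i (g \o f)).

(* Tr_{f|_A}(mu)(y) = t : the fibre of f|_A over y is finite and the sum of
   the weights over it is t *)
Definition trace_is (X Y : topologicalType) (A : set X) (f : X -> Y)
    (mu : X -> nat) (y : Y) (t : nat) : Prop :=
  exists s : seq X, uniq s /\ (forall x, (A x /\ f x = y) <-> x \in s) /\
                    sumn (map mu s) = t.

Definition branched_covering (X Y : topologicalType) (CX : cone_complex X)
    (CY : cone_complex Y) (mu : X -> nat) (p : X -> Y) : Prop :=
  [/\ is_weight CX mu,
      cc_morphism CX CY p,
      (forall y, exists x, p x = y),
      (forall i : cc_idx CX, exists j : cc_idx CY,
          p @` cc_cone i = cc_cone j /\ embedding_on (cc_cone i) p) &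
      (forall U : set Y, open U -> connected U ->
        forall V : set X, (exists x, U (p x) /\
                              V = connected_component (p @^-1` U) x) ->
          exists c, forall y, U y -> trace_is V p mu y c)].

(* M(sigma) = restrictions of M = Hom(N,Z), generated by coordinates    *)

Definition fan_cc n (S : fan n) : cone_complex 'rV[R]_n :=
  @ConeComplex _ (fan_idx S) (@fan_cone n S) (fun _ => n)
               (fun _ (j : 'I_n) (x : 'rV[R]_n) => x 0 j).

Record tlms_data (n : nat) := TLMS {
  tl_space : topologicalType;
  tl_cc : cone_complex tl_space;
  tl_mu : tl_space -> nat;
  tl_pi : tl_space -> 'rV[R]_n;
  tl_phi : tl_space -> R }.
Arguments tl_space {n} _.
Arguments tl_cc {n} _.
Arguments tl_mu {n} _ _.
Arguments tl_pi {n} _ _.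
Arguments tl_phi {n} _ _.

Definition is_tlms n (S : fan n) (r : nat) (L : tlms_data n) : Prop :=
  [/\ is_cone_complex (tl_cc L),
      branched_covering (tl_cc L) (fan_cc S) (tl_mu L) (tl_pi L),
      (forall y, trace_is setT (tl_pi L) (tl_mu L) y r),
      continuous (tl_phi L) &
      (forall i : cc_idx (tl_cc L), inM i (tl_phi L))].

Definition tl_connected n (L : tlms_data n) : Prop :=
  connected [set: tl_space L].

Definition tlms_le n (L1 L2 : tlms_data n) : Prop :=
  exists f : tl_space L2 -> tl_space L1,
  [/\ cc_morphism (tl_cc L2) (tl_cc L1) f,
      (forall y, exists x, f x = y),
      (forall x, tl_pi L1 (f x) = tl_pi L2 x),
      (forall y, trace_is setT f (tl_mu L2) y (tl_mu L1 y)) &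
      (forall x, tl_phi L1 (f x) = tl_phi L2 x)].

Definition k_separable n (S : fan n) (k : nat) (L : tlms_data n) : Prop :=
  tl_connected L /\
  forall tau : fan_idx S, fan_dim tau = k ->
  forall a b : cc_idx (tl_cc L), a <> b ->
    tl_pi L @` cc_cone a = fan_cone tau -> tl_pi L @` cc_cone b = fan_cone tau ->
    ~ (forall xa xb, cc_cone a xa -> cc_cone b xb ->
         tl_pi L xa = tl_pi L xb -> tl_phi L xa = tl_phi L xb).

Definition separable n (S : fan n) (L : tlms_data n) : Prop :=
  k_separable S 1 L.

Definition sim_c n (S : fan n) (L1 L2 : tlms_data n) : Prop :=
  tl_connected L1 /\ tl_connected L2 /\
  (exists r, is_tlms S r L1 /\ is_tlms S r L2) /\
  exists L, (exists r, is_tlms S r L) /\ tlms_le L L1 /\ tlms_le L L2.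

Definition comb_equiv n (S : fan n) : tlms_data n -> tlms_data n -> Prop :=
  clos_refl_sym_trans (tlms_data n) (@sim_c n S).

(* Main.v *)
Require Import Defs.
From HB Require Import structures.
From mathcomp Require Import all_boot all_order all_algebra.
From mathcomp Require Import all_classical all_reals all_analysis.
From mathcomp Require Import Rstruct Rstruct_topology generic_quotient.
From mathcomp Require Import ring lra.
From Stdlib Require Import Relation_Operators.
Set Implicit Arguments. Unset Strict Implicit. Unset Printing Implicit Defensive.
Import Order.TTheory GRing.Theory Num.Theory.
Local Open Scope classical_set_scope.
Local Open Scope ring_scope.
Local Open Scope quotient_scope.

Lemma lin_mulmx (k m : nat) (u : 'rV[R]_m) (v : 'rV[R]_k) (W : 'M[R]_(k, m)) :
  lin u (v *m W) = lin (u *m W^T) v.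
Proof.
rewrite /lin.
under eq_bigr => j _ do rewrite !mxE big_distrr /=.
rewrite exchange_big /=; apply: eq_bigr => i _; rewrite !mxE big_distrl /=.
by apply: eq_bigr => j _; rewrite !mxE; ring.
Qed.

Lemma lin_row_mx (k m : nat) (a1 v1 : 'rV[R]_k) (a2 v2 : 'rV[R]_m) :
  lin (row_mx a1 a2) (row_mx v1 v2) = lin a1 v1 + lin a2 v2.
Proof.
by rewrite /lin big_split_ord /=; congr (_ + _); apply: eq_bigr => i _;
  rewrite ?row_mxEl ?row_mxEr.
Qed.

Lemma lin0 (k : nat) (a : 'rV[R]_k) : lin a 0 = 0.
Proof. by rewrite /lin big1 // => i _; rewrite mxE mulr0. Qed.

Lemma lin0l (k : nat) (v : 'rV[R]_k) : lin 0 v = 0.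
Proof. by rewrite /lin big1 // => i _; rewrite mxE mul0r. Qed.

Lemma linZ (k : nat) (a v : 'rV[R]_k) (t : R) : lin a (t *: v) = t * lin a v.
Proof.
by rewrite /lin big_distrr; apply: eq_bigr => i _; rewrite mxE /= mulrCA.
Qed.

Lemma linN (k : nat) (a v : 'rV[R]_k) : lin a (- v) = - lin a v.
Proof.
by rewrite /lin -sumrN; apply: eq_bigr => i _; rewrite mxE; ring.
Qed.

Lemma poscone0 (k : nat) (s : seq 'rV[rat]_k) : poscone s 0.
Proof.
by exists (fun _ => 0); split => //; rewrite big1 // => j _; rewrite scale0r.
Qed.

Lemma posconeZ (k : nat) (s : seq 'rV[rat]_k) (t : R) v :
  0 <= t -> poscone s v -> poscone s (t *: v).
Proof.
move=> t0 [lam [lam0 ->]]; exists (fun j => t * lam j); split.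
  by move=> j; apply: mulr_ge0.
by rewrite scaler_sumr; apply: eq_bigr => j _; rewrite scalerA.
Qed.

Lemma posconeP (k : nat) (s : seq 'rV[rat]_k) v :
  poscone s v <-> exists lam : nat -> R, (forall j, 0 <= lam j) /\
     v = \sum_(0 <= j < size s) lam j *: map_mx ratr s`_j.
Proof.
split.
  case=> lam [lam0 ->].
  exists (fun j => if insub j is Some o then lam o else 0); split.
    by move=> j; case: insubP => //= o _ _; apply: lam0.
  rewrite big_mkord; apply: eq_bigr => o _; by rewrite valK.
case=> lam [lam0 ->]; exists (fun o => lam o); split => //.
by rewrite big_mkord.
Qed.

Lemma poscone_mulmx (k m : nat) (s : seq 'rV[rat]_k) (W : 'M[rat]_(k, m)) :
  [set v *m map_mx ratr W | v in poscone s] = poscone [seq t *m W | t <- s].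
Proof.
have E (lam : nat -> R) : (\sum_(0 <= j < size s) lam j *: map_mx ratr s`_j) *m map_mx ratr W
   = \sum_(0 <= j < size [seq t *m W | t <- s]) lam j *: map_mx ratr [seq t *m W | t <- s]`_j.
  rewrite mulmx_suml size_map big_nat_cond [RHS]big_nat_cond.
  apply: eq_bigr => j /andP[/andP[_ js] _].
  by rewrite (nth_map 0) // -scalemxAl map_mxM.
apply/seteqP; split => w.
  case=> v /posconeP [lam [lam0 ->]] <-; apply/posconeP; exists lam; split => //.
case/posconeP => lam [lam0 ->]; exists (\sum_(0 <= j < size s) lam j *: map_mx ratr s`_j).
  by apply/posconeP; exists lam.
exact: E.
Qed.

Lemma mx_cont (T : topologicalType) m k (f : T -> 'M[R]_(m,k)) :
  (forall i j, continuous (fun x => f x i j)) -> continuous f.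
Proof.
move=> h x; apply/cvg_mx_entourageP => A entA.
have H : forall ij : 'I_m * 'I_k, \forall y \near x, (f x ij.1 ij.2, f y ij.1 ij.2) \in A.
  move=> [i j]; have := h i j x _ (nbhs_entourage (f x i j) entA).
  move=> H0; near=> y.
  have : xsection A (f x i j) (f y i j) by near: y; exact: H0.
  by move/xsectionP; rewrite inE.
have H2 := @filter_forall _ _ (fun ij y => (f x ij.1 ij.2, f y ij.1 ij.2) \in A) (@nbhs T T x) (nbhs_filter x) H.
move: H2; apply: filterS => y Hy i j; exact: (Hy (i, j)).
Unshelve. all: by end_near. Qed.

Lemma sumn_map (T : Type) (f : T -> nat) s : sumn (map f s) = \sum_(x <- s) f x.
Proof. by rewrite sumnE big_map. Qed.

Lemma sum_eq_mem (T : eqType) (s1 s2 : seq T) (f : T -> nat) :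
  uniq s1 -> uniq s2 -> s1 =i s2 -> \sum_(x <- s1) f x = \sum_(x <- s2) f x.
Proof. by move=> u1 u2 e; apply/perm_big/uniq_perm. Qed.

Lemma part_sum (T1 T2 : eqType) (g : T1 -> T2) (Z : seq T2) (F : seq T1)
  (f : T1 -> nat) : uniq Z -> (forall x, x \in F -> g x \in Z) ->
  \sum_(z <- Z) \sum_(x <- F | g x == z) f x = \sum_(x <- F) f x.
Proof.
move=> uZ HF; under eq_bigr => z _ do rewrite big_mkcond.
rewrite exchange_big /= big_seq [RHS]big_seq.
apply: eq_bigr => x xF; rewrite (bigD1_seq (g x)) ?HF //= eqxx.
by rewrite big1 ?addn0 ?addr0 // => z zx; rewrite eq_sym (negPf zx).
Qed.


Section Main.
Variables (n : nat) (S : fan n) (r : nat) (L : tlms_data n).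
Hypotheses (HS : is_fan S) (HSc : complete_fan S) (HL : is_tlms S r L).

Local Notation X := (tl_space L).
Local Notation C := (tl_cc L).
Local Notation I := (cc_idx (tl_cc L)).
Local Notation pi := (tl_pi L).
Local Notation phi := (tl_phi L).
Local Notation mu := (tl_mu L).
Local Notation cone := (@cc_cone _ (tl_cc L)).
Local Notation ev := (@cc_ev _ (tl_cc L)).

Lemma HCC : is_cone_complex C. Proof. by case: HL. Qed.
Lemma HBC : branched_covering C (fan_cc S) mu pi. Proof. by case: HL. Qed.
Lemma Htr y : trace_is setT pi mu y r. Proof. by case: HL. Qed.
Lemma phi_cont : continuous phi. Proof. by case: HL. Qed.
Lemma phi_M (i : I) : inM i phi. Proof. by case: HL. Qed.
Lemma pi_cont : continuous pi. Proof. by case: HBC => _ [] . Qed.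
Lemma pi_mor (i : I) : exists j : fan_idx S,
  (forall x, cone i x -> fan_cone j (pi x)) /\
  (forall g, @inM _ (fan_cc S) j g -> inM i (g \o pi)).
Proof. by case: HBC => _ [_ ] + _ _ _; apply. Qed.
Lemma pi_onto (i : I) : exists j : fan_idx S,
  pi @` cone i = fan_cone j /\ embedding_on (cone i) pi.
Proof. by case: HBC => _ _ _ + _; apply. Qed.
Lemma pi_inj (i : I) x y : cone i x -> cone i y -> pi x = pi y -> x = y.
Proof. by have [j [_ [_ [H _]]]] := pi_onto i; apply: H. Qed.
Lemma relint_ex1 x : exists! i : I, relint i x.
Proof. by case: HCC => _ _ _ _; apply. Qed.
Lemma cone_cov x : exists i : I, cone i x.
Proof. by have [i [[H _] _]] := relint_ex1 x; exists i. Qed.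
Lemma ev_poscone (i : I) : exists s, ev i @` cone i = poscone s.
Proof. by case: HCC => _ _ + _ _ => /(_ i) [_]. Qed.
Lemma face_ax (i : I) (a : 'rV[R]_(cc_dim i)) : supp_fun a ->
  exists j : I, cone j = cone i `&` [set x | lin a (ev i x) = 0].
Proof. by case: HCC => _ _ _ + _ => /(_ i a) H /H [j [H1 _]]; exists j. Qed.
Lemma cone_closed (i : I) : closed (cone i).
Proof. by case: HCC. Qed.

Definition pp (x : X) : 'rV[R]_(1 + n) := row_mx (phi x)%:M (pi x).

Lemma lin_rep (i : I) : exists W : 'M[int]_(cc_dim i, 1 + n),
  forall x, cone i x -> pp x = ev i x *m map_mx intr W.
Proof.
have [zf Hf] := phi_M i.
have [j [_ Hj]] := pi_mor i.
have : forall l : 'I_n, exists z : 'I_(cc_dim i) -> int,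
    forall x, cone i x -> pi x 0 l = \sum_(k < cc_dim i) (z k)%:~R * cc_gen k x.
  move=> l; have := Hj (fun y => y 0 l); case.
    exists (fun k => (k == l)%:R) => y _ /=.
    rewrite (bigD1 l) //= eqxx big1 ?addr0 ?mul1r //.
    by move=> k /negPf ->; rewrite mul0r.
  by move=> z Hz; exists z => x /Hz.
case/choice => zp Hp.
exists (\matrix_(m < cc_dim i, k < 1 + n) match @fintype.split 1 n k with inl _ => zf m | inr l => zp l m end).
move=> x xi; apply/rowP => k; rewrite -[k]splitK; case: (fintype.split k) => [k0|l] /=.
  rewrite /pp row_mxEl mxE ord1 eqxx mulr1n Hf // !mxE; apply: eq_bigr => m _.
  by rewrite !mxE (unsplitK (inl _)) mulrC.
rewrite /pp row_mxEr Hp // !mxE; apply: eq_bigr => m _.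
by rewrite !mxE (unsplitK (inr _)) mulrC.
Qed.


Lemma pull (i : I) (u : 'rV[R]_(1 + n)) : exists a : 'rV_(cc_dim i),
  forall x, cone i x -> lin a (ev i x) = lin u (pp x).
Proof.
have [W HW] := lin_rep i; exists (u *m (map_mx intr W)^T) => x xi.
by rewrite HW // lin_mulmx.
Qed.

Lemma lin_pp_pi (u : 'rV[R]_n) x : lin (row_mx 0 u) (pp x) = lin u (pi x).
Proof. by rewrite /pp lin_row_mx lin0l add0r. Qed.

Lemma pullpi (i : I) (u : 'rV[R]_n) : exists a : 'rV_(cc_dim i),
  forall x, cone i x -> lin a (ev i x) = lin u (pi x).
Proof.
have [a Ha] := pull i (row_mx 0 u); exists a => x xi.
by rewrite Ha // lin_pp_pi.
Qed.

Lemma fan_face_fn (a b : fan_idx S) : exists u : 'rV[R]_n,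
  (forall v, fan_cone a v -> 0 <= lin u v) /\
  fan_cone a `&` fan_cone b = fan_cone a `&` [set v | lin u v = 0].
Proof. by case: HS => _ _ _ /(_ a b) [[u [H1 H2]] _]; exists u. Qed.

Lemma fan_pointed (a : fan_idx S) v : fan_cone a v -> fan_cone a (- v) -> v = 0.
Proof. by case: HS => _ H _ _; apply: H. Qed.

Lemma pp_inj (i : I) x y : cone i x -> cone i y -> pp x = pp y -> x = y.
Proof.
move=> xi yi /eq_row_mx [_ E]; exact: pi_inj xi yi E.
Qed.

Lemma cone_scale (i : I) x t : cone i x -> 0 <= t ->
  exists w, cone i w /\ pp w = t *: pp x.
Proof.
move=> xi t0; have [s Hs] := ev_poscone i; have [W HW] := lin_rep i.
have : poscone s (t *: ev i x) by apply: posconeZ => //; rewrite -Hs; exists x.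
rewrite -Hs => -[w wi Ew]; exists w; split => //.
by rewrite !HW // Ew scalemxAl.
Qed.

Lemma pi_of_pp x t y : pp x = t *: pp y -> pi x = t *: pi y.
Proof. by rewrite /pp scale_row_mx => /eq_row_mx [_ ->]. Qed.

Lemma phi_of_pp x t y : pp x = t *: pp y -> phi x = t * phi y.
Proof.
rewrite /pp scale_row_mx => /eq_row_mx [E _].
by have := congr1 (fun M : 'M[R]_(1) => M 0 0) E; rewrite !mxE /= !mulr1n.
Qed.

Lemma pi0_pp0 x : pi x = 0 -> pp x = 0.
Proof.
move=> px; have [i xi] := cone_cov x.
have [w [wi Ew]] := cone_scale xi (le_refl 0); rewrite scale0r in Ew.
have pw : pi w = 0 by move: Ew; rewrite /pp -row_mx0 => /eq_row_mx [_ ->].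
by rewrite -(pi_inj wi xi) // pw px.
Qed.

Lemma pi0_phi0 x : pi x = 0 -> phi x = 0.
Proof.
move=> /pi0_pp0; rewrite /pp -row_mx0 => /eq_row_mx [E _].
by have := congr1 (fun M : 'M[R]_(1) => M 0 0) E; rewrite !mxE /= mulr1n.
Qed.

Lemma relint_in_fan (i : I) x (t : fan_idx S) : relint i x -> fan_cone t (pi x) ->
  forall w, cone i w -> fan_cone t (pi w).
Proof.
move=> [xi Hx] xt w wi.
have [sg [Hsg _]] := pi_onto i.
have [u [u0 Hu]] := fan_face_fn sg t.
have [a Ha] := pullpi i u.
have sgP y : cone i y -> fan_cone sg (pi y) by move=> yi; rewrite -Hsg; exists y.
have : lin a (ev i w) = 0.
  apply: (Hx a) => //.
    by move=> y yi; rewrite Ha //; apply: u0; apply: sgP.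
  rewrite Ha //.
  have : (fan_cone sg `&` fan_cone t) (pi x) by split => //; apply: sgP.
  by rewrite Hu => -[].
rewrite Ha // => wu.
have : (fan_cone sg `&` [set v | lin u v = 0]) (pi w) by split => //; apply: sgP.
by rewrite -Hu => -[].
Qed.

Lemma relint0_single (i : I) x : relint i x -> pi x = 0 ->
  forall w, cone i w -> w = x.
Proof.
move=> [xi Hx] px0 w wi.
have [pw|pw0] := eqVneq (pi w) 0; first by apply: pi_inj wi xi _; rewrite px0.
have [rho Hrho] := HSc (- pi w).
have [sg [Hsg _]] := pi_onto i.
have [u [u0 Hu]] := fan_face_fn sg rho.
have [a Ha] := pullpi i u.
have sgP y : cone i y -> fan_cone sg (pi y) by move=> yi; rewrite -Hsg; exists y.
have : lin a (ev i w) = 0.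
  apply: (Hx a) => //.
    by move=> y yi; rewrite Ha //; apply: u0; apply: sgP.
  by rewrite Ha // px0 lin0.
rewrite Ha // => wu.
have : (fan_cone sg `&` [set v | lin u v = 0]) (pi w) by split => //; apply: sgP.
rewrite -Hu => -[_ Hw].
by move: pw0; rewrite (fan_pointed Hw Hrho) eqxx.
Qed.


Lemma rank1_mult (m k : nat) (M : 'M[rat]_(m, k)) : \rank M = 1%N ->
  exists b : 'rV[rat]_k, forall j, exists c : rat, row j M = c *: b.
Proof.
move=> hr.
have [j0 Hj0] : exists j0, row j0 M != 0.
  apply/not_existsP => H; move: hr; suff -> : M = 0 by rewrite mxrank0.
  apply/row_matrixP => j; rewrite row0; apply/eqP; apply/negP => /negP Hn.
  by apply: (H j).
set b := row j0 M; exists b.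
have rb : \rank b = 1%N.
  apply/eqP; rewrite eqn_leq rank_leq_row /= lt0n mxrank_eq0 //.
have : (b == M)%MS by rewrite -(mxrank_leqif_eq (row_sub j0 M)).2 rb hr.
case/andP => _ Mb j.
have : (row j M <= b)%MS by apply: submx_trans (row_sub j M) Mb.
move/submxP => [D HD]; exists (D 0 0); rewrite HD.
by rewrite {1}[D]mx11_scalar mul_scalar_mx.
Qed.

Lemma ray (t : fan_idx S) y y' : fan_dim t = 1%N -> fan_cone t y -> y != 0 ->
  fan_cone t y' -> exists c, 0 <= c /\ y' = c *: y.
Proof.
rewrite /fan_dim => /rank1_mult [b Hb] ty y0 ty'.
set g := fan_gens t in Hb.
have Hg : forall j : nat, exists c : rat, g`_j = c *: b.
  move=> j; case: (ltnP j (size g)) => js.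
    have [c Hc] := Hb (Ordinal js); exists c; rewrite -Hc.
    by apply/rowP => l; rewrite !mxE.
  by exists 0; rewrite nth_default // scale0r.
case/choice: Hg => cf Hcf.
set bR := map_mx ratr b : 'rV[R]_n.
have Hv v : fan_cone t v -> exists mu : R, v = mu *: bR.
  case/posconeP => lam [_ ->].
  exists (\sum_(0 <= j < size g) lam j * ratr (cf j)).
  rewrite scaler_suml; apply: eq_bigr => j _.
  by rewrite Hcf map_mxZ scalerA.
have [m1 E1] := Hv _ ty; have [m2 E2] := Hv _ ty'.
have m10 : m1 != 0 by apply: contraNneq y0 => m0; rewrite E1 m0 scale0r.
have Ey' : y' = (m2 / m1) *: y by rewrite E1 scalerA mulfVK.
have [c0|c0] := leP 0 (m2 / m1); first by exists (m2 / m1).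
exists 0; split => //; rewrite scale0r.
apply: (fan_pointed ty').
rewrite Ey' -scaleNr; apply: posconeZ => //.
by rewrite oppr_ge0 ltW.
Qed.


Definition Sk1 (y : 'rV[R]_n) : Prop :=
  y = 0 \/ exists t : fan_idx S, fan_dim t = 1%N /\ fan_cone t y.
Definition gl (x y : X) : bool :=
  `[< x = y \/ (pp x = pp y /\ Sk1 (pi x)) >].
Lemma gl_refl : reflexive gl.
Proof. by move=> x; apply/asboolP; left. Qed.
Lemma gl_sym : symmetric gl.
Proof.
move=> x y; apply/asboolP/asboolP => -[->|[e1 e3]]; (try by left); right.
  split => //; move: e1 e3; rewrite /pp => /eq_row_mx [_ ->] //.
split => //; move: e1 e3; rewrite /pp => /eq_row_mx [_ ->] //.
Qed.
Lemma gl_trans : transitive gl.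
Proof.
move=> y x z /asboolP H1 /asboolP H2; apply/asboolP.
case: H1 => [E1|[e1 e3]]; first by subst.
case: H2 => [E2|[f1 f3]]; first by subst; right.
by right; rewrite e1 f1.
Qed.
Definition glE := EquivRel gl gl_refl gl_sym gl_trans.
Definition Q0 := {eq_quot glE}.
Definition Q : topologicalType := quotient_topology Q0.
Definition q : X -> Q := \pi_Q.
Lemma qP x y : reflect (q x = q y) (gl x y).
Proof. exact: (@eqmodP _ glE x y). Qed.
Lemma q_cont : continuous q.
Proof. exact: pi_continuous. Qed.
Lemma q_surj (z : Q) : exists x, q x = z.
Proof. by exists (repr z); rewrite /q reprK. Qed.
Lemma qcont_iff (Z : topologicalType) (f : Q -> Z) : continuous (f \o q) -> continuous f.
Proof. by move=> h; apply/quotient_continuous. Qed.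
Lemma q_repr (z : Q) : q (repr z) = z.
Proof. by rewrite /q reprK. Qed.

Lemma gl_pp x y : gl x y -> pp x = pp y.
Proof. by move/asboolP => [->|[]]. Qed.
Lemma pp_pi x y : pp x = pp y -> pi x = pi y.
Proof. by rewrite /pp => /eq_row_mx []. Qed.
Lemma pp_phi x y : pp x = pp y -> phi x = phi y.
Proof.
rewrite /pp => /eq_row_mx [E _].
by have := congr1 (fun M : 'M[R]_(1) => M 0 0) E; rewrite !mxE /= !mulr1n.
Qed.

Definition pi' (z : Q) := pi (repr z).
Definition phi' (z : Q) := phi (repr z).
Definition pp' (z : Q) : 'rV[R]_(1 + n) := row_mx (phi' z)%:M (pi' z).

Lemma repr_gl x : gl (repr (q x)) x.
Proof. by apply/qP; rewrite q_repr. Qed.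
Lemma ppq x : pp' (q x) = pp x.
Proof. exact: (gl_pp (repr_gl x)). Qed.
Lemma piq x : pi' (q x) = pi x.
Proof. exact: (pp_pi (gl_pp (repr_gl x))). Qed.
Lemma phiq x : phi' (q x) = phi x.
Proof. exact: (pp_phi (gl_pp (repr_gl x))). Qed.

Lemma pi'_cont : continuous pi'.
Proof.
apply: qcont_iff; have -> : pi' \o q = pi by apply: funext => x /=; rewrite piq.
exact: pi_cont.
Qed.
Lemma phi'_cont : continuous phi'.
Proof.
apply: qcont_iff; have -> : phi' \o q = phi by apply: funext => x /=; rewrite phiq.
exact: phi_cont.
Qed.

Definition K (i : I) : set Q := q @` cone i.
Definition minrep (i : I) : bool :=
  `[< forall j : I, K j = K i -> (enum_rank i <= enum_rank j)%N >].
Definition J := {i : I | minrep i}.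

Lemma rep_ex (i : I) : exists j : J, K (val j) = K i.
Proof.
pose P := fun j : I => `[< K j = K i >].
have Pi : P i by apply/asboolP.
case: (arg_minnP (fun j => enum_rank j) Pi) => j /asboolP Pj Hmin.
have mj : minrep j.
  apply/asboolP => j' Ej'; apply: Hmin; apply/asboolP; rewrite Ej' Pj //.
by exists (exist _ j mj).
Qed.

Lemma J_inj (a b : J) : K (val a) = K (val b) -> a = b.
Proof.
case: a => a0 ma; case: b => b0 mb /= E.
have h1 := (asboolP _ ma) b0 (esym E); have h2 := (asboolP _ mb) a0 E.
have : enum_rank a0 = enum_rank b0 by apply/val_inj/eqP; rewrite eqn_leq h1 h2.
move/enum_rank_inj => Eab; subst b0; congr exist; exact: bool_irrelevance.
Qed.


Definition gens' (j : J) (k : 'I_(1 + n)) (z : Q) : R := pp' z 0 k.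
Definition CC' : cone_complex Q :=
  @ConeComplex Q J (fun j => K (val j)) (fun _ => (1 + n)%N) gens'.

Lemma ev'E (j : J) z : @cc_ev _ CC' j z = pp' z.
Proof. by apply/rowP => k; rewrite mxE. Qed.

Lemma cone'E (j : J) : @cc_cone _ CC' j = K (val j).
Proof. by []. Qed.

Lemma relint'P (j : J) (i : I) x : K (val j) = K i -> cone i x ->
  (@relint _ CC' j (q x) <-> relint i x).
Proof.
move=> Eji xi; split.
  move=> [_ H']; split => // b sb bx w0 w0i.
  have [m Hm] := face_ax sb.
  have [sm [Hsm _]] := pi_onto m.
  have [si [Hsi _]] := pi_onto i.
  have [u [u0 Hu]] := fan_face_fn si sm.
  have siP y : cone i y -> fan_cone si (pi y) by move=> yi; rewrite -Hsi; exists y.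
  have xm : cone m x by rewrite Hm.
  have := H' (row_mx 0 u).
  have /[swap]/[apply] : @supp_fun _ CC' j (row_mx 0 u).
    move=> y; rewrite cone'E Eji => -[w wi <-]; rewrite ev'E ppq lin_pp_pi.
    by apply: u0; apply: siP.
  have /[swap]/[apply] : lin (row_mx 0 u) (@cc_ev _ CC' j (q x)) = 0.
    rewrite ev'E ppq lin_pp_pi.
    have : (fan_cone si `&` fan_cone sm) (pi x).
      by split; [apply: siP | rewrite -Hsm; exists x].
    by rewrite Hu => -[].
  move=> /(_ (q w0)); rewrite cone'E Eji ev'E ppq lin_pp_pi => /(_ (ex_intro2 _ _ w0 w0i erefl)) uw0.
  have : (fan_cone si `&` [set v | lin u v = 0]) (pi w0) by split => //; apply: siP.
  rewrite -Hu => -[_]; rewrite -Hsm => -[w1 w1m E1].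
  have w1i : cone i w1 by move: w1m; rewrite Hm => -[].
  rewrite -(pi_inj w1i w0i E1).
  by move: w1m; rewrite Hm => -[].
move=> [_ Hx]; split; first by rewrite cone'E Eji; exists x.
move=> a sa ax y; rewrite cone'E Eji => -[w wi <-].
have [b Hb] := pull i a.
have sb : supp_fun b.
  move=> w' w'i; rewrite Hb // -ppq -(ev'E j); apply: sa; rewrite cone'E Eji; by exists w'.
move: ax; rewrite ev'E ppq -Hb // => /(Hx b sb) /(_ w wi).
by rewrite Hb // ev'E ppq.
Qed.


Lemma glued_half (i1 i2 : I) x1 x2 : relint i1 x1 -> relint i2 x2 ->
  pp x1 = pp x2 -> Sk1 (pi x1) -> forall w, cone i1 w -> exists2 w', cone i2 w' & gl w w'.
Proof.
move=> r1 r2 E12 sk w wi.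
have [p0|pn0] := eqVneq (pi x1) 0.
  rewrite (relint0_single r1 p0 wi); exists x2; first by case: r2.
  by apply/asboolP; right.
case: sk => [/eqP p0|[t [dt tx]]]; first by rewrite p0 in pn0.
have tw := relint_in_fan r1 tx wi.
have [c [c0 Ec]] := ray dt tx pn0 tw.
have [w1 [w1i E1]] := cone_scale (proj1 r1) c0.
have ew : w1 = w by apply: pi_inj w1i wi _; rewrite (pi_of_pp E1) Ec.
subst w1.
have [w2 [w2i E2]] := cone_scale (proj1 r2) c0.
exists w2 => //; apply/asboolP; right; split.
  by rewrite E1 E2 E12.
by right; exists t.
Qed.

Lemma glued_cones (i1 i2 : I) x1 x2 : relint i1 x1 -> relint i2 x2 -> gl x1 x2 ->
  K i1 = K i2.
Proof.
move=> r1 r2 /[dup] g12 /asboolP [E|[E sk]].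
  subst x2; have [i [_ Hu]] := relint_ex1 x1.
  by rewrite -(Hu _ r1) -(Hu _ r2).
have sk2 : Sk1 (pi x2) by rewrite -(pp_pi E).
apply/seteqP; split => z [w wi <-].
  have [w' w'i g] := glued_half r1 r2 E sk wi.
  by exists w' => //; apply/esym/qP.
have [w' w'i g] := glued_half r2 r1 (esym E) sk2 wi.
by exists w' => //; apply/esym/qP.
Qed.

Lemma relint'_ex1 z : exists! j : J, @relint _ CC' j z.
Proof.
have [x <-] := q_surj z.
have [i [ri _]] := relint_ex1 x.
have [j Ej] := rep_ex i.
exists j; split; first by apply/(relint'P Ej (proj1 ri)).
move=> j' rj'.
have [x' x'j' qx'] : exists2 x', cone (val j') x' & q x' = q x.
  by case: rj' => -[x' ? ?] _; exists x'.
move: rj'; rewrite -qx' => /(relint'P erefl x'j') rx'.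
apply: J_inj; rewrite Ej; apply/esym; apply: (glued_cones rx' ri).
exact/qP.
Qed.


Lemma pp_cont : continuous pp.
Proof.
apply: mx_cont => i k; rewrite -[k]splitK; case: (fintype.split k) => [k0|l].
  have -> : (fun x => pp x i (unsplit (inl k0))) = phi.
    by apply: funext => x; rewrite /pp row_mxEl !ord1 mxE eqxx mulr1n.
  exact: phi_cont.
have -> : (fun x => pp x i (unsplit (inr l))) = (fun M : 'rV[R]_n => M 0 l) \o pi.
  by apply: funext => x; rewrite /pp row_mxEr !ord1.
move=> x; apply: continuous_comp; [exact: pi_cont | exact: coord_continuous].
Qed.

Lemma pp'_cont : continuous pp'.
Proof.
apply: qcont_iff; have -> : pp' \o q = pp by apply: funext => x /=; rewrite ppq.
exact: pp_cont.
Qed.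

Lemma rsub_cont : continuous (fun v : 'rV[R]_(1 + n) => rsubmx v).
Proof.
apply: mx_cont => i l.
have -> : (fun v : 'rV[R]_(1 + n) => rsubmx v i l) = (fun v => v i (rshift 1 l)).
  by apply: funext => v; rewrite mxE.
exact: coord_continuous.
Qed.

Lemma rsub_pp x : rsubmx (pp x) = pi x.
Proof. by rewrite /pp row_mxKr. Qed.

Lemma emb_K_pp (i : I) : embedding_on (K i) pp'.
Proof.
have [t [_ [_ [_ H3]]]] := pi_onto i.
split; first exact: continuous_subspaceT pp'_cont.
split.
  move=> _ _ [x1 x1i <-] [x2 x2i <-]; rewrite !ppq => E.
  by rewrite (pp_inj x1i x2i E).
move=> _ [x xi <-] U HU.
have HU' : nbhs x (q @^-1` U) by apply: q_cont.
have := H3 x xi _ HU'.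
rewrite -(rsub_pp x) => H; have H' := @rsub_cont (pp x) _ H.
rewrite ppq; near=> v => _ [w wi <-]; rewrite ppq => Ew.
have : (forall z : X, cone i z -> pi z = rsubmx v -> (q @^-1` U) z).
  by near: v.
by apply => //; rewrite -Ew rsub_pp.
Unshelve. all: by end_near.
Qed.

Lemma emb_K_pi (i : I) : embedding_on (K i) pi'.
Proof.
have [t [_ [_ [_ H3]]]] := pi_onto i.
split; first exact: continuous_subspaceT pi'_cont.
split.
  move=> _ _ [x1 x1i <-] [x2 x2i <-]; rewrite !piq => E.
  by rewrite (pi_inj x1i x2i E).
move=> _ [x xi <-] U HU.
have HU' : nbhs x (q @^-1` U) by apply: q_cont.
have H := H3 x xi _ HU'.
rewrite piq; near=> v => _ [w wi <-]; rewrite piq => Ew.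
have : (forall z : X, cone i z -> pi z = v -> (q @^-1` U) z).
  by near: v.
by apply.
Unshelve. all: by end_near.
Qed.

Lemma K_poscone (i : I) : exists s, pp' @` K i = poscone s.
Proof.
have [s Hs] := ev_poscone i; have [W HW] := lin_rep i.
exists [seq t *m map_mx intr W | t <- s]; rewrite -poscone_mulmx -Hs.
apply/seteqP; split => v.
  case=> _ [x xi <-] <-; exists (ev i x); first by exists x.
  by rewrite ppq HW // -map_mx_comp; congr (_ *m _); apply/matrixP => a b;
     rewrite !mxE /= ratr_int.
case=> _ [x xi <-] <-; exists (q x); first by exists x.
by rewrite ppq HW // -map_mx_comp; congr (_ *m _); apply/matrixP => a b;
     rewrite !mxE /= ratr_int.
Qed.

Lemma face' (j : J) (a : 'rV[R]_(@cc_dim _ CC' j)) : @supp_fun _ CC' j a ->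
  exists j' : J, @cc_cone _ CC' j' = @cc_cone _ CC' j `&` [set z | lin a (@cc_ev _ CC' j z) = 0] /\
    forall f, @inM _ CC' j' f <-> @inM_restr _ CC' j j' f.
Proof.
move=> sa; have [b Hb] := pull (val j) a.
have sb : supp_fun b.
  move=> w wi; rewrite Hb // -ppq -(ev'E j); apply: sa; rewrite cone'E; by exists w.
have [m Hm] := face_ax sb.
have [j' Ej'] := rep_ex m.
exists j'; split; last by [].
rewrite !cone'E Ej'; apply/seteqP; split => z.
  case=> w; rewrite Hm => -[wi wb] <-; split; first by exists w.
  suff : lin a (@cc_ev _ CC' j (q w)) = 0 by [].
  by rewrite ev'E ppq -Hb.
case=> -[w wi <-] wb; exists w => //.
have wb' : lin a (@cc_ev _ CC' j (q w)) = 0 by [].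
move: wb'; rewrite ev'E ppq -Hb // => wb'.
by rewrite Hm.
Qed.

Lemma pi'_mor : cc_morphism CC' (fan_cc S) pi'.
Proof.
split; first exact: pi'_cont.
move=> j; have [t [Ht1 Ht2]] := pi_mor (val j).
exists t; split.
  by move=> _ [x xi <-]; rewrite piq; apply: Ht1.
move=> g [z Hz].
exists (fun k : 'I_(1 + n) => match fintype.split k with inl _ => 0 | inr l => z l end).
move=> _ [x xi <-] /=; rewrite Hz; last by rewrite piq; apply: Ht1.
rewrite big_split_ord /= [X in _ = X + _]big1 ?add0r; last first.
  by move=> k _; rewrite (unsplitK (inl _)) mul0r.
apply: eq_bigr => l _; rewrite (unsplitK (inr _)).
by rewrite /gens' /pp' row_mxEr.
Qed.

Lemma pi'_surj y : exists z, pi' z = y.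
Proof.
by case: HBC => _ _ /(_ y) [x <-] _ _; exists (q x); rewrite piq.
Qed.

Lemma pi'_onto (j : J) : exists t : fan_idx S,
  pi' @` @cc_cone _ CC' j = fan_cone t /\ embedding_on (@cc_cone _ CC' j) pi'.
Proof.
have [t [Ht _]] := pi_onto (val j); exists t; split; last exact: emb_K_pi.
rewrite cone'E -Ht; apply/seteqP; split => y.
  by case=> _ [x xi <-] <-; exists x => //; rewrite piq.
by case=> x xi <-; exists (q x); [exists x | rewrite piq].
Qed.



Definition fib (y : 'rV[R]_n) : seq X := sval (cid (Htr y)).
Lemma fib_uniq y : uniq (fib y).
Proof. by rewrite /fib; case: (cid (Htr y)) => s [? ?]. Qed.
Lemma fib_mem y x : (x \in fib y) = `[< pi x = y >].
Proof.
rewrite /fib; case: (cid (Htr y)) => s [_ [H _]] /=.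
apply/idP/asboolP; [by case/H | by move=> E; apply/H].
Qed.
Lemma fib_sum y : \sum_(x <- fib y) mu x = r.
Proof. by rewrite /fib; case: (cid (Htr y)) => s [_ [_ H]] /=; rewrite -sumn_map. Qed.

Definition qf (z : Q) : seq X := [seq x <- fib (pi' z) | q x == z].
Definition mu' (z : Q) : nat := \sum_(x <- qf z) mu x.

Lemma qf_uniq z : uniq (qf z).
Proof. exact/filter_uniq/fib_uniq. Qed.
Lemma qf_mem z x : (x \in qf z) = (q x == z).
Proof.
rewrite mem_filter fib_mem; case: eqP => //= <-.
by apply/asboolP; rewrite piq.
Qed.

Lemma mu_pos x : (0 < mu x)%N.
Proof. by case: HBC => -[H _] _ _ _ _. Qed.
Lemma mu_const (i : I) x y : relint i x -> relint i y -> mu x = mu y.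
Proof. by case: HBC => -[_ H] _ _ _ _; apply: H. Qed.

Lemma mu'_pos z : (0 < mu' z)%N.
Proof.
have [x <-] := q_surj (z); rewrite /mu' (bigD1_seq x) ?qf_uniq //=.
  by rewrite addn_gt0 mu_pos.
by rewrite qf_mem.
Qed.

Lemma sum_over_fib y (P : pred Q) :
  \sum_(z <- undup [seq q x | x <- fib y & P (q x)]) mu' z =
  \sum_(x <- fib y | P (q x)) mu x.
Proof.
rewrite -[RHS]big_filter -(@part_sum _ _ q (undup [seq q x | x <- fib y & P (q x)]) _ mu (undup_uniq _)); last first.
  by move=> x; rewrite mem_undup => xF; apply/mapP; exists x.
rewrite big_seq [RHS]big_seq; apply: eq_bigr => z zin.
move: zin; rewrite mem_undup => /mapP [x0 x0in ->].
have px0 : pi' (q x0) = y by move: x0in; rewrite mem_filter fib_mem piq => /andP[_ /asboolP].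
have Px0 : P (q x0) by move: x0in; rewrite mem_filter => /andP[].
rewrite /mu' /qf px0 !big_filter big_filter_cond; apply: eq_bigl => x.
by case: eqP => [->|]; rewrite ?Px0 ?andbF ?andbT.
Qed.

Lemma trace_pi' y : trace_is setT pi' mu' y r.
Proof.
exists (undup [seq q x | x <- fib y & predT (q x)]); split; first exact: undup_uniq.
split.
  move=> z; rewrite mem_undup; split.
    move=> [_ Ez]; apply/mapP; exists (repr z); last by rewrite q_repr.
    by rewrite mem_filter fib_mem; apply/asboolP.
  case/mapP => x; rewrite mem_filter fib_mem => /andP[_ /asboolP px] ->.
  by split => //; rewrite piq.
rewrite sumn_map sum_over_fib.
rewrite -(fib_sum y); exact: eq_bigl.
Qed.

Lemma trace_q z : trace_is setT q mu z (mu' z).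
Proof.
exists (qf z); split; first exact: qf_uniq.
split; last by rewrite sumn_map.
by move=> x; rewrite qf_mem; split; [case=> _ /eqP | move/eqP].
Qed.



Lemma q_inj_cone (i : I) w x : cone i w -> cone i x -> q w = q x -> w = x.
Proof. by move=> wi xi /qP /gl_pp E; apply: (pp_inj wi xi E). Qed.

Definition relc (x : X) : I :=
  sval (cid (ex_intro (fun i => relint i x) _ (proj1 (proj2_sig (cid (relint_ex1 x)))))).
Lemma relc_rel x : relint (relc x) x.
Proof. by rewrite /relc; case: cid. Qed.
Lemma relint_uniq (i : I) x : relint i x -> i = relc x.
Proof.
move=> ri; have [i0 [_ H]] := relint_ex1 x.
by rewrite -(H _ ri) -(H _ (relc_rel x)).
Qed.

Lemma K_of_relint' (j : J) x : @relint _ CC' j (q x) -> K (val j) = K (relc x).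
Proof.
move=> rj; have [j' Ej'] := rep_ex (relc x).
have rj' : @relint _ CC' j' (q x) by apply/(relint'P Ej' (proj1 (relc_rel x)))/relc_rel.
have [j0 [_ H]] := relint'_ex1 (q x).
by rewrite -Ej' -(H _ rj) -(H _ rj').
Qed.

Lemma mu'_const (j : J) z1 z2 : @relint _ CC' j z1 -> @relint _ CC' j z2 -> mu' z1 = mu' z2.
Proof.
move=> r1 r2.
pose h x := match pselect (exists w, cone (relc x) w /\ q w = z2) with
  | left H => sval (cid H) | right _ => x end.
have hP x : q x = z1 -> [/\ cone (relc x) (h x), q (h x) = z2 & relint (relc x) (h x)].
  move=> qx.
  have EK : K (val j) = K (relc x) by apply: K_of_relint'; rewrite qx.
  have ex : exists w, cone (relc x) w /\ q w = z2.
    by case: r2 => + _; rewrite cone'E EK => -[w wi <-]; exists w.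
  rewrite /h; case: pselect => [H|//]; case: (cid H) => w [wi qw] /=.
  split => //; apply/(relint'P EK wi); rewrite qw //.
have hmu x : q x = z1 -> mu (h x) = mu x.
  by move=> qx; have [_ _ rh] := hP x qx; apply: (mu_const rh (relc_rel x)).
have Hmem : map h (qf z1) =i qf z2.
  move=> x2; apply/mapP/idP.
    by case=> x1; rewrite qf_mem => /eqP qx1 ->; rewrite qf_mem; have [_ -> _] := hP _ qx1.
  rewrite qf_mem => /eqP qx2.
  have EK : K (val j) = K (relc x2) by apply: K_of_relint'; rewrite qx2.
  case: (r1) => + _; rewrite cone'E EK => -[x1 x1i qx1].
  have rx1 : relint (relc x2) x1 by apply/(relint'P EK x1i); rewrite qx1.
  have Ec := relint_uniq rx1.
  exists x1; first by rewrite qf_mem qx1.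
  have [hi qh _] := hP x1 qx1.
  rewrite -Ec in hi.
  by apply: (q_inj_cone (proj1 (relc_rel x2)) hi); rewrite qh qx2.
have Hu : uniq (map h (qf z1)).
  rewrite map_inj_in_uniq ?qf_uniq // => x1 x1' /[!qf_mem] /eqP q1 /eqP q1' Eh.
  have [h1 _ rh1] := hP _ q1; have [h1' _ rh1'] := hP _ q1'.
  rewrite Eh in rh1; have Ec := relint_uniq rh1; have Ec' := relint_uniq rh1'.
  have Ec2 : relc x1 = relc x1' by rewrite Ec Ec'.
  apply: (q_inj_cone (proj1 (relc_rel x1))); last by rewrite q1 q1'.
  by rewrite Ec2; apply: (proj1 (relc_rel x1')).
rewrite /mu' -(sum_eq_mem _ Hu (qf_uniq z2) Hmem) big_map big_seq [RHS]big_seq.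
by apply: eq_bigr => x; rewrite qf_mem => /eqP /hmu ->.
Qed.


Lemma HBC5 (U : set 'rV[R]_n) : open U -> connected U -> forall x, U (pi x) ->
  exists c, forall y, U y -> trace_is (connected_component (pi @^-1` U) x) pi mu y c.
Proof.
move=> oU cU x Ux; case: HBC => _ _ _ _ H; apply: (H U oU cU).
by exists x.
Qed.

Lemma Ltrace (U : set 'rV[R]_n) : open U -> connected U -> forall x, U (pi x) ->
  exists c, forall y, U y ->
  \sum_(w <- fib y | `[< connected_component (pi @^-1` U) x w >]) mu w = c.
Proof.
move=> oU cU x Ux; have [c Hc] := HBC5 oU cU Ux; exists c => y Uy.
have [s [us [Hs <-]]] := Hc y Uy.
rewrite -big_filter sumn_map; apply: sum_eq_mem; rewrite ?filter_uniq ?fib_uniq //.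
move=> w; rewrite mem_filter fib_mem; apply/andP/idP.
  by case=> /asboolP h1 /asboolP h2; apply/Hs.
by move/Hs => [h1 h2]; split; apply/asboolP.
Qed.

Lemma Lhas (U : set 'rV[R]_n) : open U -> connected U -> forall x, U (pi x) ->
  forall y, U y -> exists w, connected_component (pi @^-1` U) x w /\ pi w = y.
Proof.
move=> oU cU x Ux y Uy; have [c Hc] := Ltrace oU cU Ux.
have cpos : (0 < c)%N.
  rewrite -(Hc _ Ux) -big_filter (bigD1_seq x) ?filter_uniq ?fib_uniq //=.
    by rewrite addn_gt0 mu_pos.
  rewrite mem_filter fib_mem; apply/andP; split; apply/asboolP => //.
  exact: connected_component_refl.
have : has (fun w => `[< connected_component (pi @^-1` U) x w >]) (fib y).
  apply/negPn/negP => hn; move: cpos; rewrite -(Hc _ Uy) big_hasC //.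
case/hasP => w; rewrite fib_mem => /asboolP pw /asboolP cw.
by exists w.
Qed.

Lemma comp_sub (U : set 'rV[R]_n) z0 x :
  connected_component (pi' @^-1` U) z0 (q x) ->
  forall w, connected_component (pi @^-1` U) x w ->
  connected_component (pi' @^-1` U) z0 (q w).
Proof.
move=> Vx w Cw.
have Ux : U (pi x) by rewrite -piq; apply: (connected_component_sub Vx).
rewrite (same_connected_component Vx).
apply: (@connected_component_max _ _ (q @` connected_component (pi @^-1` U) x)).
- by exists x => //; apply: connected_component_refl.
- by move=> _ [w' Cw' <-]; rewrite /preimage /= piq; apply: (connected_component_sub Cw').
- apply: connected_continuous_connected; first exact: component_connected.
  exact: continuous_subspaceT q_cont.
- by exists w.
Qed.


Lemma comp_trace (U : set 'rV[R]_n) : open U -> connected U ->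
  forall V : set Q, (exists z0, U (pi' z0) /\ V = connected_component (pi' @^-1` U) z0) ->
  exists c, forall y, U y -> trace_is V pi' mu' y c.
Proof.
move=> oU cU V [z0 [Uz0 ->]].
set y0 := pi' z0.
set VV := connected_component (pi' @^-1` U) z0.
pose Pq : pred Q := fun z => `[< VV z >].
pose T y := \sum_(x <- fib y | Pq (q x)) mu x.
pose compL x := connected_component (pi @^-1` U) x.
pose R0 := [seq x <- fib y0 | Pq (q x)].
pose rep x := nth x R0 (find (fun x0 => `[< compL x0 = compL x >]) R0).
pose c x0 := \sum_(w <- fib y0 | `[< compL x0 w >]) mu w.
have inF y1 x : U y1 -> x \in fib y1 -> Pq (q x) ->
    has (fun x0 => `[< compL x0 = compL x >]) R0.
  move=> Uy1; rewrite fib_mem => /asboolP px /asboolP Vx.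
  have Ux : U (pi x) by rewrite px.
  have [w [Cw pw]] := Lhas oU cU Ux Uz0.
  apply/hasP; exists w.
    rewrite mem_filter fib_mem; apply/andP; split; apply/asboolP => //.
    exact: (comp_sub Vx Cw).
  by apply/asboolP; apply/esym/same_connected_component.
have repP y1 x : U y1 -> x \in fib y1 -> Pq (q x) ->
    rep x \in R0 /\ compL (rep x) = compL x.
  move=> Uy1 xF Px; have hh := inF _ _ Uy1 xF Px; split.
    by apply: mem_nth; rewrite -has_find.
  by have /asboolP := nth_find x hh.
have repE a b : compL a = compL b ->
    has (fun x0 => `[< compL x0 = compL a >]) R0 -> rep a = rep b.
  move=> Eab h; rewrite /rep.
  have -> : (fun x1 => `[< compL x1 = compL a >]) = (fun x1 => `[< compL x1 = compL b >]).
    by apply: funext => x1; rewrite Eab.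
  by apply: set_nth_default; rewrite -has_find -Eab.
have key y1 : U y1 -> T y1 = \sum_(x0 <- R0 | rep x0 == x0) c x0.
  move=> Uy1; rewrite /T -big_filter.
  rewrite -(@part_sum _ _ rep R0 _ mu); last first.
    by move=> x; rewrite mem_filter => /andP[Px xF]; case: (repP _ _ Uy1 xF Px).
    by rewrite filter_uniq ?fib_uniq.
  rewrite [RHS]big_mkcond /= big_seq [RHS]big_seq; apply: eq_bigr => x0 x0R.
  have x0F : x0 \in fib y0 by move: x0R; rewrite mem_filter => /andP[].
  have Px0 : Pq (q x0) by move: x0R; rewrite mem_filter => /andP[].
  have Ux0 : U (pi x0) by move: x0F; rewrite fib_mem => /asboolP ->.
  have [rx0 crx0] := repP _ _ Uz0 x0F Px0.
  case: eqP => [Erx0|Nrx0]; last first.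
    rewrite big_seq_cond big_pred0 // => x; apply/negP => /andP[].
    rewrite mem_filter => /andP[Px xF] /eqP Ex.
    have [_ crx] := repP _ _ Uy1 xF Px.
    apply: Nrx0; rewrite -{2}Ex -Ex; apply: repE => //.
    by rewrite crx; apply: inF xF Px.
  have [c' Hc'] := Ltrace oU cU Ux0.
  rewrite /c (Hc' _ Uz0) -(Hc' _ Uy1) big_filter_cond.
  rewrite big_seq_cond [RHS]big_seq_cond; apply: eq_bigl => x.
  case xF: (x \in fib y1) => //=.
  have Ux : U (pi x) by move: xF; rewrite fib_mem => /asboolP ->.
  apply/andP/asboolP.
    case=> Px /eqP Ex; have [_ crx] := repP _ _ Uy1 xF Px.
    by rewrite -Ex; change (compL (rep x) x); rewrite crx; apply: connected_component_refl.
  move=> Cx; have Ecx : compL x0 = compL x by apply: same_connected_component.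
  have Px : Pq (q x).
    apply/asboolP; apply: (comp_sub (asboolP _ Px0) Cx).
  split => //; apply/eqP; rewrite -[in RHS]Erx0; apply: repE; first by [].
  exact: inF xF Px.
exists (T y0) => y Uy.
exists (undup [seq q x | x <- fib y & Pq (q x)]); split; first exact: undup_uniq.
split; last by transitivity (T y); [rewrite sumn_map sum_over_fib | rewrite (key _ Uy) (key _ Uz0)].
move=> z; rewrite mem_undup; split.
  move=> [Vz Ez]; apply/mapP; exists (repr z); last by rewrite q_repr.
  rewrite mem_filter fib_mem q_repr; apply/andP; split; apply/asboolP => //.
case/mapP => x; rewrite mem_filter fib_mem => /andP[/asboolP Px /asboolP px] ->.
by split => //; rewrite piq.
Qed.


Lemma rV_connected : connected [set: 'rV[R]_n].
Proof.
pose A (v : 'rV[R]_n) := [set t *: v | t in `[0, 1]%classic].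
have -> : [set: 'rV[R]_n] = \bigcup_(v in setT) A v.
  apply/seteqP; split => v // _; exists v => //; exists 1; last by rewrite scale1r.
  by rewrite /= in_itv /= ler01 lexx.
apply: bigcup_connected.
  exists 0 => v _; exists 0; last by rewrite scale0r.
  by rewrite /= in_itv /= lexx ler01.
move=> v _; apply: connected_continuous_connected; first exact: segment_connected.
apply: continuous_subspaceT => t; apply: continuousZr_tmp.
exact: cvg_id.
Qed.

Lemma Q_connected : connected [set: Q].
Proof.
have [w0 pw0] : exists w0, pi w0 = 0 by case: HBC => _ _ /(_ 0) [x px] _ _; exists x.
pose A x := q @` connected_component (pi @^-1` [set: 'rV[R]_n]) x.
have -> : [set: Q] = \bigcup_(x in setT) A x.
  apply/seteqP; split => z // _; have [x <-] := q_surj z; exists x => //.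
  by exists x => //; apply: connected_component_refl.
apply: bigcup_connected.
  exists (q w0) => x _.
  have [w [Cw pw]] := Lhas openT rV_connected (Logic.I : [set: 'rV[R]_n] (pi x)) (Logic.I : [set: 'rV[R]_n] 0).
  exists w => //; apply/qP; apply/asboolP; right; split; last by left.
  by rewrite !pi0_pp0.
move=> x _; apply: connected_continuous_connected; first exact: component_connected.
exact: continuous_subspaceT q_cont.
Qed.

Lemma q_mor : cc_morphism C CC' q.
Proof.
split; first exact: q_cont.
move=> i; have [j Ej] := rep_ex i; exists j; split.
  by move=> x xi; rewrite cone'E Ej; exists x.
move=> g [z Hz]; have [W HW] := lin_rep i.
exists (fun m => \sum_(k < 1 + n) z k * W m k) => x xi /=.
rewrite Hz; last by rewrite cone'E Ej; exists x.
have -> : \sum_(k < @cc_dim _ CC' j) (z k)%:~R * @cc_gen _ CC' j k (q x) =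
    \sum_(k < 1 + n) (z k)%:~R * pp x 0 k by apply: eq_bigr => k _; rewrite -ppq.
have E1 k : pp x 0 k = \sum_(m < cc_dim i) ev i x 0 m * (W m k)%:~R.
  by rewrite HW // mxE; apply: eq_bigr => m _; rewrite !mxE.
have -> : \sum_(k < 1 + n) (z k)%:~R * pp x 0 k = \sum_(k < 1 + n)
   \sum_(m < cc_dim i) (z k)%:~R * (ev i x 0 m * (W m k)%:~R).
  by apply: eq_bigr => k _; rewrite E1 big_distrr.
rewrite exchange_big /=; apply: eq_bigr => m _.
rewrite rmorph_sum big_distrl /=; apply: eq_bigr => k _.
by rewrite !mxE intrM mulrCA mulrC.
Qed.

Lemma phi'_M (j : J) : @inM _ CC' j phi'.
Proof.
exists (fun k : 'I_(1 + n) => match fintype.split k with inl _ => 1 | inr _ => 0 end).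
move=> z _ /=; rewrite big_split_ord /= big_ord1 (unsplitK (inl _)).
rewrite big1 ?addr0; last by move=> l _; rewrite (unsplitK (inr _)) mul0r.
by rewrite /gens' /pp' row_mxEl mxE eqxx mulr1n mul1r.
Qed.

Lemma Lsep_sep (t : fan_idx S) : fan_dim t = 1%N -> forall a b : J, a <> b ->
  pi' @` @cc_cone _ CC' a = fan_cone t -> pi' @` @cc_cone _ CC' b = fan_cone t ->
  ~ (forall xa xb, @cc_cone _ CC' a xa -> @cc_cone _ CC' b xb ->
       pi' xa = pi' xb -> phi' xa = phi' xb).
Proof.
move=> dt a b nab Ea Eb H; apply: nab; apply: J_inj.
have sub (c d : J) : pi' @` @cc_cone _ CC' c = fan_cone t ->
    pi' @` @cc_cone _ CC' d = fan_cone t ->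
    (forall z w, @cc_cone _ CC' c z -> @cc_cone _ CC' d w -> pi' z = pi' w -> phi' z = phi' w) ->
    K (val c) `<=` K (val d).
  move=> Ec Ed Hcd z zc.
  have tz : fan_cone t (pi' z) by rewrite -Ec; exists z.
  have := tz; rewrite -Ed => -[w wd Ew].
  have Ephi := Hcd z w zc wd (esym Ew).
  move: zc wd; rewrite !cone'E => zc wd.
  suff -> : z = w by [].
  case: zc => x xc Ex; case: wd => x' x'd Ex'.
  rewrite -Ex -Ex'; apply/qP/asboolP; right; split.
    by rewrite -!ppq Ex Ex' /pp' Ephi Ew.
  by right; exists t; split => //; rewrite -piq Ex.
apply/seteqP; split; first exact: sub.
apply: sub => // z w zb wa E; apply/esym; apply: H => //.
Qed.


Lemma cont_bigsum (T : topologicalType) (J0 : Type) (s : seq J0) (F : J0 -> T -> R) :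
  (forall j, continuous (F j)) -> continuous (fun x => \sum_(j <- s) F j x).
Proof.
move=> h; elim: s => [|j s IH].
  under eq_fun do rewrite big_nil; exact: cst_continuous.
under eq_fun do rewrite big_cons.
move=> x; have := @continuousD R R^o T (F j) (fun x => \sum_(j <- s) F j x) x (h j x) (IH x).
exact.
Qed.

Lemma pi_coord_cont j : continuous (fun x => pi x 0 j).
Proof.
have -> : (fun x => pi x 0 j) = (fun M : 'rV[R]_n => M 0 j) \o pi by [].
move=> x; apply: continuous_comp; [exact: pi_cont | exact: coord_continuous].
Qed.

Lemma closed_lin (u : 'rV[R]_n) : closed [set x : X | lin u (pi x) = 0].
Proof.
have -> : [set x : X | lin u (pi x) = 0] = (fun x => lin u (pi x)) @^-1` [set t | t = 0] by [].
apply: (proj1 (continuous_closedP _)); last exact: closed_eq.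
apply: cont_bigsum => j x; apply: continuousM; first exact: cst_continuous.
exact: pi_coord_cont.
Qed.

Lemma closed_pi0 : closed [set x : X | pi x = 0].
Proof.
have -> : [set x : X | pi x = 0] =
   (fun x => \sum_(j < n) pi x 0 j * pi x 0 j) @^-1` [set t | t = 0].
  apply/seteqP; split => x /=.
    by move=> ->; apply: big1 => j _; rewrite mxE mulr0.
  move=> /psumr_eq0P H; apply/rowP => j; rewrite mxE.
  have := H (fun k _ => sqr_ge0 (pi x 0 k)) j isT.
  by move/eqP; rewrite mulf_eq0 orbb => /eqP.
apply: (proj1 (continuous_closedP _)); last exact: closed_eq.
by apply: cont_bigsum => j x; apply: continuousM; exact: pi_coord_cont.
Qed.


Lemma in_bigsetU (T : Type) (J0 : eqType) (s : seq J0) (F : J0 -> set T) x :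
  (\big[setU/set0]_(j <- s) F j) x <-> exists2 j, j \in s & F j x.
Proof.
elim: s => [|j s IH]; first by rewrite big_nil; split => // -[].
rewrite big_cons; split.
  case=> [Fx|/IH [j' j's Fx]]; first by exists j; rewrite ?mem_head.
  by exists j' => //; rewrite in_cons j's orbT.
case=> j'; rewrite in_cons => /orP [/eqP ->|j's] Fx; first by left.
by right; apply/IH; exists j'.
Qed.

Lemma closed_bigU_fin (T : topologicalType) (J0 : finType) (F : J0 -> set T) :
  (forall j, closed (F j)) -> closed (\bigcup_(j in [set: J0]) F j).
Proof.
move=> cF; have -> : \bigcup_(j in [set: J0]) F j = \big[setU/set0]_(j <- enum J0) F j.
  apply/seteqP; split => x.
    by case=> j _ Fx; apply/in_bigsetU; exists j; rewrite ?mem_enum.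
  by case/in_bigsetU => j _ Fx; exists j.
by apply: closed_bigsetU => j _; apply: cF.
Qed.

Definition Hset (i b : I) : set X :=
  cone b `&` [set x | Sk1 (pi x) /\ exists w, cone i w /\ pp w = pp x].

Lemma Hset_closed (i b : I) : closed (Hset i b).
Proof.
have [sb [Hsb _]] := pi_onto b.
have [si [Hsi [_ [_ H3]]]] := pi_onto i.
have [u [u0 Hu]] := fan_face_fn sb si.
have [ut Hut] := choice (fun t => fan_face_fn sb t).
pose SK := [set x : X | pi x = 0] `|`
   \bigcup_(t in [set: fan_idx S]) [set x : X | fan_dim t = 1%N /\ lin (ut t) (pi x) = 0].
pose E := [set x : X | lin u (pi x) = 0].
have cl : closed (cone b `&` SK `&` E).
  apply: closedI; last exact: closed_lin.
  apply: closedI; first exact: cone_closed.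
  apply: closedU; first exact: closed_pi0.
  apply: closed_bigU_fin => t; case: (pselect (fan_dim t = 1%N)) => dt.
    have -> : [set x : X | fan_dim t = 1%N /\ lin (ut t) (pi x) = 0] =
        [set x : X | lin (ut t) (pi x) = 0].
      by apply/seteqP; split => x /=; [case | split].
    exact: closed_lin.
  have -> : [set x : X | fan_dim t = 1%N /\ lin (ut t) (pi x) = 0] = set0.
    by apply/seteqP; split => x //= -[].
  exact: closed0.
have sbP y : cone b y -> fan_cone sb (pi y) by move=> yb; rewrite -Hsb; exists y.
have siP y : cone i y -> fan_cone si (pi y) by move=> yi; rewrite -Hsi; exists y.
have Hsub : Hset i b `<=` cone b `&` SK `&` E.
  move=> x [xb [sk [w [wi Ew]]]]; have pw := pp_pi Ew.
  split; [split => //|].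
    case: sk => [p0|[t [dt tx]]]; first by left.
    right; exists t => //; split => //.
    have : (fan_cone sb `&` fan_cone t) (pi x) by split => //; apply: sbP.
    by rewrite (proj2 (Hut t)) => -[].
  have : (fan_cone sb `&` fan_cone si) (pi x) by split; [apply: sbP | rewrite -pw; apply: siP].
  by rewrite Hu => -[].
move=> x clx.
have [[xb xSK] xE] : (cone b `&` SK `&` E) x by apply: cl; apply: closureS Hsub _ clx.
have : fan_cone si (pi x).
  have : (fan_cone sb `&` [set v | lin u v = 0]) (pi x) by split => //; apply: sbP.
  by rewrite -Hu => -[].
rewrite -Hsi => -[w wi Ew].
have sk : Sk1 (pi x).
  case: xSK => [p0|[t _ [dt ut0]]]; first by left.
  right; exists t; split => //.
  have : (fan_cone sb `&` [set v | lin (ut t) v = 0]) (pi x) by split => //; apply: sbP.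
  by rewrite -(proj2 (Hut t)) => -[].
have Ephi : phi w = phi x.
  apply: Rhausdorff => A B hA hB.
  have NA : nbhs w (phi @^-1` A) := @phi_cont w _ hA.
  have NB : nbhs x (phi @^-1` B) := @phi_cont x _ hB.
  have P := H3 w wi _ NA; rewrite Ew in P.
  have NP : nbhs x (pi @^-1` [set y | forall z, cone i z -> pi z = y -> (phi @^-1` A) z]).
    exact: (@pi_cont x _ P).
  have [x' [[x'b [_ [w' [w'i Ew']]]] [Bx' Px']]] := clx _ (filterI NB NP).
  exists (phi x'); split => //.
  by rewrite -(pp_phi Ew'); apply: (Px' w' w'i (pp_pi Ew')).
split => //; split => //; exists w; split => //.
by rewrite /pp Ephi Ew.
Qed.

Lemma preK_closed (i : I) : closed (q @^-1` K i).
Proof.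
have -> : q @^-1` K i = \bigcup_(b in [set: I]) ((cone b `&` cone i) `|` Hset i b).
  apply/seteqP; split => x.
    case=> w wi /esym /qP /asboolP gwx.
    have [b xb] := cone_cov x; exists b => //.
    case: gwx => [Ewx|[Ep sk]]; first by left; split => //; rewrite Ewx.
    by right; split => //; split => //; exists w; split => //; rewrite Ep.
  case=> b _ [[xb xi]|[xb [sk [w [wi Ew]]]]]; first by exists x.
  exists w => //; apply/qP/asboolP; right; split => //.
  by rewrite (pp_pi Ew).
apply: closed_bigU_fin => b; apply: closedU; last exact: Hset_closed.
by apply: closedI; exact: cone_closed.
Qed.

Lemma K_closed (i : I) : closed (K i).
Proof.
rewrite -openC.
have : open (q @^-1` (~` K i)) by rewrite preimage_setC openC; exact: preK_closed.
exact.
Qed.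


Definition Lsep : tlms_data n := @TLMS n Q CC' mu' pi' phi'.

Lemma Lsep_cc : is_cone_complex CC'.
Proof.
split.
- by move=> j; exact: K_closed.
- move=> j k; apply: continuous_subspaceT => z.
  apply: (@continuous_comp _ _ _ pp' (fun M : 'rV[R]_(1 + n) => M 0 k)).
    exact: pp'_cont.
  exact: coord_continuous.
- move=> j; have -> : @cc_ev _ CC' j = pp' by apply: funext => z; rewrite ev'E.
  by split; [exact: emb_K_pp | exact: K_poscone].
- by move=> j a sa; apply: face'.
- exact: relint'_ex1.
Qed.

Lemma Lsep_bc : branched_covering CC' (fan_cc S) mu' pi'.
Proof.
split.
- split; first exact: mu'_pos.
  by move=> j z1 z2; apply: mu'_const.
- exact: pi'_mor.
- exact: pi'_surj.
- exact: pi'_onto.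
- move=> U oU cU V HV; exact: comp_trace.
Qed.

Lemma Lsep_tlms : is_tlms S r Lsep.
Proof.
split.
- exact: Lsep_cc.
- exact: Lsep_bc.
- exact: trace_pi'.
- exact: phi'_cont.
- exact: phi'_M.
Qed.

Lemma Lsep_le : tlms_le Lsep L.
Proof.
exists q; split.
- exact: q_mor.
- exact: q_surj.
- by move=> x; rewrite /= piq.
- exact: trace_q.
- by move=> x; rewrite /= phiq.
Qed.

Lemma Lsep_separable : separable S Lsep.
Proof.
split; first exact: Q_connected.
move=> t dt a b nab Ea Eb; exact: (Lsep_sep dt nab Ea Eb).
Qed.

End Main.

Lemma tlms_le_refl (n : nat) (L : tlms_data n) : tlms_le L L.
Proof.
exists id; split.
- split; first by move=> x.
  by move=> i; exists i; split.
- by move=> y; exists y.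
- by [].
- move=> y; exists [:: y]; split => //; split; last by rewrite /= addn0.
  by move=> x; rewrite inE; split; [case=> _ -> | move/eqP ->].
- by [].
Qed.

Theorem proposition3p14 (n : nat) (S : fan n) (r : nat) (L : tlms_data n) :
  is_fan S -> complete_fan S -> is_tlms S r L ->
  (exists Lsep : tlms_data n,
     [/\ is_tlms S r Lsep, separable S Lsep & tlms_le Lsep L]) /\
  (tl_connected L ->
     exists Lsep : tlms_data n,
       [/\ is_tlms S r Lsep, separable S Lsep & comb_equiv S L Lsep]).
Proof.
move=> HS HSc HL; split.
  exists (Lsep HL); split.
  - exact: Lsep_tlms.
  - exact: Lsep_separable.
  - exact: Lsep_le.
move=> Lc; exists (Lsep HL); split.
- exact: Lsep_tlms.
- exact: Lsep_separable.
- apply: rst_step; split => //; split; first exact: (Q_connected HL).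
  split; first by exists r; split => //; exact: Lsep_tlms.
  exists (Lsep HL); split; first by exists r; exact: Lsep_tlms.
  split; first exact: Lsep_le.
  exact: tlms_le_refl.
Qed.
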